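(* Consider a multiservice loss system with $K$ call types in which every call type uses the same bandwidth $b>0$ and has the same service rate $\mu>0$: type $j$ calls arrive as a Poisson process of rate $\lambda_j>0$, have exponential holding times of rate $\mu$, and blocking a type-$j$ call costs $\omega_j\ge0$. The link has capacity $C$ with $M=\lfloor C/b\rfloor\ge1$, and a call of any type is accepted iff the current total used capacity $b\sum_k q_k$ is at most $C-b$. Thus the admitted states are $\Omega=\{\bar q\in\mathbb{Z}_{\ge0}^K: |\bar q|\le M\}$, where $|\bar q|=\sum_{k=1}^K q_k$, and the set of accepted types in state $\bar q$ is $R_{\bar q}=\{1,\dots,K\}$ if $|\bar q|<M$ and $R_{\bar q}=\emptyset$ if $|\bar q|=M$. Let $\pi_{\bar q}=G^{-1}\prod_{j=1}^K\frac{(\lambda_j/\mu)^{q_j}}{q_j!}$ for $\bar q\in\Omega$ with $G$ the normalizing constant, let $r_{\bar q}=\sum_{j\notin R_{\bar q}}\omega_j\lambda_j$, $g=\sum_{\bar q\in\Omega}r_{\bar q}\pi_{\bar q}$, and $\rho=\sum_{k=1}^K\lambda_k/\mu$. Define for $\bar q\in\Omega$, with $q=|\bar q|$, $$v(\bar q)=\frac{g}{\mu\rho}\sum_{i=1}^{q}\sum_{m=0}^{q-i}\frac{(q-i)!}{(q-i-m)!}\rho^{-m}.$$ Then $v$ satisfies Howard's equation: for every $\bar q\in\Omega$, $$\sum_{j\in R_{\bar q}}\lambda_j\big(v(\bar q+e_j)-v(\bar q)\big)-\sum_{j=1}^K\mu q_j\big(v(\bar q)-v(\bar q-e_j)\big)=g-r_{\bar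 q},$$ where $e_j$ is the $j$-th unit vector and terms with $q_j=0$ in the second sum are $0$. *)

(* Defs.v *)
From mathcomp Require Import all_boot all_order all_algebra.
Set Implicit Arguments. Unset Strict Implicit. Unset Printing Implicit Defensive.
Import Order.TTheory GRing.Theory Num.Theory.
Local Open Scope ring_scope.

Section Loss.
Variables (R : realFieldType) (K M : nat).
Variables (lam omega : 'I_K -> R) (mu : R).

Definition qsize (q : 'I_K -> nat) : nat := (\sum_(k < K) q k)%N.

Definition inOmega (q : 'I_K -> nat) : bool := (qsize q <= M)%N.

Definition accepted (q : 'I_K -> nat) (j : 'I_K) : bool := (qsize q < M)%N.

Definition addE (q : 'I_K -> nat) (j : 'I_K) : 'I_K -> nat :=
  fun k => (q k + (k == j))%N.
Definition subE (q : 'I_K -> nat) (j : 'I_K) : 'I_K -> nat :=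
  fun k => (q k - (k == j))%N.

Definition weight (q : 'I_K -> nat) : R :=
  \prod_(j < K) ((lam j / mu) ^+ (q j) / ((q j)`!)%:R).

(* Omega is enumerated by the finite type {ffun 'I_K -> 'I_M.+1}
   restricted to |q| <= M *)
Definition toState (s : {ffun 'I_K -> 'I_M.+1}) : 'I_K -> nat :=
  fun k => nat_of_ord (s k).

Definition Gnorm : R :=
  \sum_(s : {ffun 'I_K -> 'I_M.+1} | inOmega (toState s)) weight (toState s).

Definition pi (q : 'I_K -> nat) : R := weight q / Gnorm.

Definition rew (q : 'I_K -> nat) : R :=
  \sum_(j < K | ~~ accepted q j) omega j * lam j.

Definition gavg : R :=
  \sum_(s : {ffun 'I_K -> 'I_M.+1} | inOmega (toState s))
     rew (toState s) * pi (toState s).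

Definition rho : R := \sum_(k < K) lam k / mu.

Definition vfun (q : 'I_K -> nat) : R :=
  let n := qsize q in
  gavg / (mu * rho) *
  \sum_(1 <= i < n.+1) \sum_(0 <= m < (n - i).+1)
     (((n - i)`!)%:R / ((n - i - m)`!)%:R * rho ^- m).

End Loss.

(* Main.v *)
Require Import Defs.
From mathcomp Require Import all_boot all_order all_algebra.
From mathcomp Require Import ring lra.
Import Order.TTheory GRing.Theory Num.Theory.
Local Open Scope ring_scope.
Set Implicit Arguments. Unset Strict Implicit.

Section Poly.
Variables (R : realFieldType) (M : nat).

Definition agree (P Q : {poly R}) := forall n, (n <= M)%N -> P`_n = Q`_n.
Definition Tp (a : R) : {poly R} := \poly_(k < M.+1) (a ^+ k / (k`!)%:R).

Lemma fact_neq0 n : (n`!)%:R != 0 :> R.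
Proof. by rewrite pnatr_eq0 -lt0n fact_gt0. Qed.

Lemma agreeM P Q P' Q' : agree P P' -> agree Q Q' -> agree (P * Q) (P' * Q').
Proof.
move=> hP hQ n hn; rewrite !coefM; apply: eq_bigr => i _.
have hi : (i <= M)%N by apply: leq_trans hn; rewrite -ltnS.
rewrite hP // hQ //; apply: leq_trans hn; exact: leq_subr.
Qed.

Lemma TpD a b : agree (Tp a * Tp b) (Tp (a + b)).
Proof.
move=> n hn; rewrite coefM coef_poly ltnS hn addrC exprDn.
rewrite mulr_suml; apply: eq_bigr => i _.
have hi : (i <= n)%N by rewrite -ltnS.
rewrite !coef_poly ltnS (leq_trans hi hn) ltnS (leq_trans (leq_subr i n) hn).
have := bin_fact hi => /(congr1 (fun k => k%:R : R)); rewrite !natrM => hb.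
have h1 := fact_neq0 i; have h2 := fact_neq0 (n - i); have h3 := fact_neq0 n.
rewrite -mulr_natr -hb; field.
by repeat (apply/andP; split); rewrite pnatr_eq0 -lt0n ?fact_gt0 ?bin_gt0.
Qed.

Lemma Tp0 : Tp 0 = 1.
Proof.
apply/polyP => n; rewrite coef_poly coef1 expr0n.
case: n => [|n] //=; first by rewrite fact0 divr1.
by rewrite mul0r; case: ifP.
Qed.

Lemma agree_refl P : agree P P. Proof. by []. Qed.
Lemma agree_trans P Q S : agree P Q -> agree Q S -> agree P S.
Proof. by move=> h1 h2 n hn; rewrite h1 // h2. Qed.

Lemma prodTp (I : Type) (r : seq I) (Pr : pred I) (a : I -> R) :
  agree (\prod_(i <- r | Pr i) Tp (a i)) (Tp (\sum_(i <- r | Pr i) a i)).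
Proof.
apply: (big_ind2 (fun P x => agree P (Tp x))).
- by rewrite Tp0.
- move=> x1 x2 y1 y2 h1 h2; apply: agree_trans (TpD x2 y2).
  exact: agreeM.
- by [].
Qed.

End Poly.

Section W.
Variables (R : realFieldType) (K M : nat) (lam : 'I_K -> R) (mu : R).

Definition Wn (n : nat) : R :=
  \sum_(s : {ffun 'I_K -> 'I_M.+1} | qsize (toState s) == n) weight lam mu (toState s).

Lemma prodZX (c : 'I_K -> R) (e : 'I_K -> nat) :
  \prod_j (c j *: ('X^(e j) : {poly R})) = (\prod_j c j) *: 'X^(\sum_j e j).
Proof.
rewrite -mul_polyC (eq_bigr (fun j => (c j)%:P * 'X^(e j))); last by move=> j _; rewrite mul_polyC.
by rewrite big_split /= rmorph_prod prodrXr.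
Qed.

Lemma Wn_eq n : (n <= M)%N -> Wn n = rho lam mu ^+ n / (n`!)%:R.
Proof.
move=> hn.
have := @prodTp R M _ (index_enum 'I_K) predT (fun j => lam j / mu) n hn.
rewrite -/(rho lam mu) coef_poly ltnS hn => <-.
rewrite (eq_bigr (fun j => \sum_(k : 'I_M.+1) ((lam j / mu) ^+ k / (k`!)%:R) *: 'X^k)); last first.
  by move=> j _; rewrite /Tp poly_def.
rewrite bigA_distr_bigA /= coef_sum /Wn big_mkcond /=; apply: eq_bigr => f _.
rewrite prodZX coefZ coefXn /weight /toState /qsize.
by rewrite eq_sym; case: ifP => _; rewrite ?mulr1 ?mulr0.
Qed.

End W.

Section TS.
Variable (R : realFieldType).

Definition Tt (r : R) (k : nat) : R :=
  \sum_(0 <= m < k.+1) ((k`!)%:R / ((k - m)`!)%:R * r ^- m).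
Definition Ss (r : R) (n : nat) : R := \sum_(1 <= i < n.+1) Tt r (n - i).

Lemma Tt0 r : Tt r 0 = 1.
Proof. by rewrite /Tt big_nat1 subnn fact0 expr0 invr1 !mulr1. Qed.

Lemma TtS r k : r != 0 -> Tt r k.+1 = 1 + (k.+1)%:R / r * Tt r k.
Proof.
move=> hr; rewrite /Tt big_nat_recl // subn0 expr0 invr1 mulr1 divff ?fact_neq0 //.
congr (_ + _); rewrite mulr_sumr; apply: eq_bigr => m _.
rewrite subSS factS natrM exprS.
have h1 := fact_neq0 R k; have h2 := fact_neq0 R (k - m).
have h3 : r ^+ m != 0 by rewrite expf_neq0.
field; by rewrite h2 h3 hr.
Qed.

Lemma SsS r n : Ss r n.+1 = Tt r n + Ss r n.
Proof.
rewrite /Ss big_nat_recl // subSS subn0.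
by congr (_ + _); apply: eq_bigr => i _; rewrite subSS.
Qed.

Lemma Uk r k : r != 0 -> r ^+ k / (k`!)%:R * Tt r k = \sum_(i < k.+1) r ^+ i / (i`!)%:R.
Proof.
move=> hr; elim: k => [|k IH].
  by rewrite Tt0 big_ord_recl big_ord0 expr0 fact0 divr1 !mulr1 addr0.
rewrite big_ord_recr /= -IH TtS // factS natrM exprS.
have h1 := fact_neq0 R k; have h3 : r ^+ k != 0 by rewrite expf_neq0.
have h4 : (k.+1)%:R != 0 :> R by rewrite pnatr_eq0.
field; repeat (apply/andP; split). all: rewrite ?nat1r ?pnatr_eq0 -?lt0n ?fact_gt0 //. all: exact: hr.
Qed.

Lemma TtKey r m : r != 0 -> r * Tt r m - m%:R * Tt r m.-1 = r.
Proof.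
move=> hr; case: m => [|k] /=; first by rewrite Tt0 mul0r subr0 mulr1.
rewrite TtS //; field; exact: hr.
Qed.

End TS.

Section Main.
Variables (R : realFieldType) (K M : nat) (lam omega : 'I_K -> R) (mu : R).

Lemma qsize_addE (q : 'I_K -> nat) j : qsize (addE q j) = (qsize q).+1.
Proof.
have h1 : (\sum_(i < K) ((i == j) : nat))%N = 1%N.
  by rewrite (bigD1 j) //= eqxx big1 // => i /negbTE ->.
by rewrite /qsize /addE big_split /= h1 addn1.
Qed.

Lemma qsize_subE (q : 'I_K -> nat) j : (0 < q j)%N -> qsize q = (qsize (subE q j)).+1.
Proof.
move=> hj; rewrite -(qsize_addE _ j) /qsize; apply: eq_bigr => i _.
rewrite /addE /subE; case: eqP => [->|_]; rewrite ?subn0 ?addn0 //.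
by rewrite subn1 addn1 prednK.
Qed.

Definition Om : R := \sum_(j < K) omega j * lam j.

Lemma rewE (s : 'I_K -> nat) : (qsize s <= M)%N ->
  rew M lam omega s = if qsize s == M then Om else 0.
Proof.
rewrite /rew /accepted /Om => hs; case: ltngtP => h.
- by rewrite big_pred0 // => j; rewrite h.
- by move: hs; rewrite leqNgt h.
- by [].
Qed.

Lemma Gnorm_sum : Gnorm M lam mu = \sum_(n < M.+1) Wn M lam mu n.
Proof.
rewrite /Gnorm /Wn; under [RHS]eq_bigr => n _ do rewrite big_mkcond.
rewrite exchange_big big_mkcond /=; apply: eq_bigr => s _.
rewrite -big_mkcond /= (eq_bigl (fun n : 'I_M.+1 => (n : nat) == qsize (toState s))).
  by rewrite (big_ord1_eq _ (fun _ => weight lam mu (toState s))) /inOmega ltnS.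
by move=> n; rewrite eq_sym.
Qed.

Lemma gavgE : gavg M lam omega mu = Om * Wn M lam mu M / Gnorm M lam mu.
Proof.
rewrite /gavg /Wn /pi mulr_sumr mulr_suml big_mkcond [RHS]big_mkcond /=.
apply: eq_bigr => s _; rewrite /inOmega.
case: (leqP (qsize (toState s)) M) => h.
  rewrite rewE //; case: eqP => _; rewrite ?mul0r //; by rewrite mulrA.
by rewrite (gtn_eqF h).
Qed.

End Main.

Theorem mainTheorem4 (R : realFieldType) (K M : nat)
  (lam omega : 'I_K -> R) (mu : R)
  (hmu : 0 < mu) (hlam : forall j, 0 < lam j) (homega : forall j, 0 <= omega j)
  (hM : (1 <= M)%N)
  (q : 'I_K -> nat) (hq : inOmega M q) :
  \sum_(j < K | accepted M q j)
      lam j * (vfun M lam omega mu (addE q j) - vfun M lam omega mu q)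
  - \sum_(j < K) mu * (q j)%:R *
      (vfun M lam omega mu q - vfun M lam omega mu (subE q j))
  = gavg M lam omega mu - rew M lam omega q.
Proof.
have [K0|Kpos] := posnP K.
  subst K; rewrite !big_ord0 subrr.
  rewrite /gavg /rew big_ord0 big1 ?subr0 // => s _.
  by rewrite big_ord0 mul0r.
set r := rho lam mu.
have hr : 0 < r.
  rewrite /r /rho (bigD1 (Ordinal Kpos)) //=.
  have h1 : 0 < lam (Ordinal Kpos) / mu by rewrite divr_gt0.
  have h2 : 0 <= \sum_(i < K | i != Ordinal Kpos) lam i / mu.
    by apply: sumr_ge0 => i _; rewrite divr_ge0 // ltW.
  lra.
have hr0 : r != 0 by rewrite gt_eqF.
have hmu0 : mu != 0 by rewrite gt_eqF.
have hsl : \sum_(j < K) lam j = mu * r.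
  rewrite /r /rho mulr_sumr; apply/esym; under eq_bigr => j _ do rewrite mulrC divfK //; by [].
set g := gavg M lam omega mu.
set c := g / (mu * r).
have vE : forall x : 'I_K -> nat, vfun M lam omega mu x = c * Ss r (qsize x) by [].
set n := qsize q.
have hn : (n <= M)%N by [].
have sum2 : \sum_(j < K) mu * (q j)%:R *
      (vfun M lam omega mu q - vfun M lam omega mu (subE q j))
    = mu * n%:R * c * Tt r n.-1.
  case hn0: n => [|k].
    rewrite mulr0n mulr0 !mul0r big1 // => j _.
    have : (q j <= n)%N by rewrite /n /qsize (bigD1 j) //= leq_addr.
    by rewrite hn0 leqn0 => /eqP ->; rewrite mulr0 mul0r.
  rewrite /= -[k.+1]hn0 /n /qsize natr_sum; set T := Tt r k.
  have eT : T = Tt r k by []. clearbody T.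
  rewrite [in RHS]mulr_sumr ![in RHS]mulr_suml; apply: eq_bigr => j _.
  case: (posnP (q j)) => hqj; first by rewrite hqj !mulr0 !mul0r.
  rewrite !vE.
  have -> : qsize (subE q j) = k.
    by apply/eqP; rewrite -eqSS -(qsize_subE hqj) -/n hn0.
  rewrite (_ : qsize q = k.+1) // SsS eT; ring.
have hT := TtS (n.-1) hr0.
case: (ltngtP n M) => hnM.
-
  rewrite rewE // -/n (ltn_eqF hnM) subr0 sum2.
  rewrite /accepted -/n hnM.
  under eq_bigr => j _ do rewrite !vE qsize_addE -/n SsS -mulrBr addrK.
  rewrite -mulr_suml hsl /c.
  transitivity (g / r * (r * Tt r n - n%:R * Tt r n.-1)).
    field; by rewrite hmu0 hr0.
  by rewrite TtKey //; field; exact: hr0.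
- by move: hn; rewrite leqNgt hnM.
-
  rewrite rewE // -/n hnM eqxx sum2 /accepted -/n hnM ltnn big_pred0 // sub0r.
  have hW := Wn_eq lam mu (leqnn M).
  have hG : Gnorm M lam mu = \sum_(i < M.+1) r ^+ i / (i`!)%:R.
    rewrite Gnorm_sum; apply: eq_bigr => i _.
    have hi : (i <= M)%N by rewrite -ltnS.
    by rewrite Wn_eq.
  have hU := Uk M hr0.
  have hG0 : Gnorm M lam mu != 0.
    rewrite hG big_ord_recl expr0 fact0 divr1 gt_eqF //.
    have : 0 <= \sum_(i < M) r ^+ (bump 0 i) / ((bump 0 i)`!)%:R.
      by apply: sumr_ge0 => i _; rewrite divr_ge0 ?exprn_ge0 ?ltW // ltr0n fact_gt0.
    lra.
  have hTM : Tt r M != 0.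
    by move: hG0; rewrite hG -hU; apply: contra => /eqP ->; rewrite mulr0.
  have hrM : r ^+ M != 0 by rewrite expf_neq0.
  have hfM := fact_neq0 R M.
  have hgT : g * Tt r M = Om lam omega.
    rewrite /g gavgE hW -/r hG -hU.
    field; repeat (apply/andP; split); by [exact: hrM | exact: hfM | exact: hTM | exact: hr0 | exact: hmu0].
  have hT' := TtS (M.-1) hr0; rewrite prednK // in hT'.
  rewrite -hgT hT' /c.
  field; repeat (apply/andP; split); by [exact: hr0 | exact: hmu0].
Qed.
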